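(* Let $\Sigma\supseteq\Sigma_m$ be a signature and $E\supseteq\mathrm{Md}$ a set of $\Sigma$-equations such that $(\Sigma,E)$ has the propagation property for pseudo units and the propagation property for pseudo zeros. Then $E$ is a complete axiomatisation of the equational theory of $\mathrm{Mod}_\Sigma(E\cup\mathrm{IL})$: for all $\Sigma$-terms $r,s$, $E\vdash r=s$ (in equational logic) if and only if $r=s$ holds in every $\Sigma$-structure satisfying all equations of $E$ and the inverse law $\mathrm{IL}$.
   Context: $\Sigma_m=(0,1,+,\cdot,-,{}^{-1})$; $\mathrm{Md}$ is the set of equations $(x+y)+z=x+(y+z)$, $x+y=y+x$, $x+0=x$, $x+(-x)=0$, $(x\cdot y)\cdot z=x\cdot(y\cdot z)$, $x\cdot y=y\cdot x$, $1\cdot x=x$, $x\cdot(y+z)=x\cdot y+x\cdot z$, $(x^{-1})^{-1}=x$, $x\cdot(x\cdot x^{-1})=x$. $1_t$ abbreviates $t\cdot t^{-1}$, $0_t$ abbreviates $1+(-1_t)$. The inverse law $\mathrm{IL}$ is the conditional axiom $x\neq 0\rightarrow x\cdot x^{-1}=1$ (universally quantified). $\mathrm{Mod}_\Sigma(E\cup\mathrm{IL})$ is the class of $\Sigma$-structures satisfying $E$ and $\mathrm{IL}$. $(\Sigma,E)$ has the propagation property for pseudo units if for all $\Sigma$-terms $t,r$ and every context $C[\,]$, $E\vdash 1_t\cdot C[r]=1_t\cdot C[1_t\cdot r]$; it has the propagation property for pseudo zeros if for all $\Sigma$-terms $t,r$ and every context $C[\,]$, $E\vdash 0_t\cdot C[r]=0_t\cdot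 C[0_t\cdot r]$. *)

(* Defs.v *)
From mathcomp Require Import all_boot.
Set Implicit Arguments. Unset Strict Implicit. Unset Printing Implicit Defensive.

Section UA.
(* A signature Sigma containing Sigma_m = (0,1,+,.,-,^-1): the meadow symbols
   plus an arbitrary type X of further function symbols with arities arX. *)
Variables (X : Type) (arX : X -> nat).

Inductive sym : Type :=
  s_zero | s_one | s_add | s_mul | s_opp | s_inv | s_ext of X.

Definition ar (f : sym) : nat :=
  match f with
  | s_zero | s_one => 0
  | s_add | s_mul => 2
  | s_opp | s_inv => 1
  | s_ext x => arX x
  end.

Inductive term : Type :=
  | Var of nat
  | App (f : sym) of ('I_(ar f) -> term).
Arguments App f _ : clear implicits.

Definition args2 (a b : term) : 'I_2 -> term :=
  fun i => if val i == 0 then a else b.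

Definition tzero : term := App s_zero (fun _ => Var 0).
Definition tone : term := App s_one (fun _ => Var 0).
Definition tadd (a b : term) : term := App s_add (args2 a b).
Definition tmul (a b : term) : term := App s_mul (args2 a b).
Definition topp (a : term) : term := App s_opp (fun _ => a).
Definition tinv (a : term) : term := App s_inv (fun _ => a).

Definition one_t (t : term) : term := tmul t (tinv t).
Definition zero_t (t : term) : term := tadd tone (topp (one_t t)).

Fixpoint subst (s : nat -> term) (t : term) : term :=
  match t with
  | Var n => s n
  | App f a => App f (fun i => subst s (a i))
  end.

Inductive ctx : Type :=
  | Hole
  | CApp (f : sym) (j : 'I_(ar f)) (a : 'I_(ar f) -> term) (c : ctx).
Arguments CApp f j a c : clear implicits.

Fixpoint plug (c : ctx) (r : term) : term :=
  match c with
  | Hole => r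
  | CApp f j a c' => App f (fun i => if i == j then plug c' r else a i)
  end.

Inductive derives (E : term -> term -> Prop) : term -> term -> Prop :=
  | d_ax l r : E l r -> derives E l r
  | d_refl t : derives E t t
  | d_sym t u : derives E t u -> derives E u t
  | d_trans t u w : derives E t u -> derives E u w -> derives E t w
  | d_subst (s : nat -> term) t u : derives E t u -> derives E (subst s t) (subst s u)
  | d_cong (f : sym) (a b : 'I_(ar f) -> term) :
      (forall i, derives E (a i) (b i)) -> derives E (App f a) (App f b).

(* the equations Md (x = Var 0, y = Var 1, z = Var 2) *)
Inductive Md : term -> term -> Prop :=
  | md1 : Md (tadd (tadd (Var 0) (Var 1)) (Var 2)) (tadd (Var 0) (tadd (Var 1) (Var 2)))
  | md2 : Md (tadd (Var 0) (Var 1)) (tadd (Var 1) (Var 0))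
  | md3 : Md (tadd (Var 0) tzero) (Var 0)
  | md4 : Md (tadd (Var 0) (topp (Var 0))) tzero
  | md5 : Md (tmul (tmul (Var 0) (Var 1)) (Var 2)) (tmul (Var 0) (tmul (Var 1) (Var 2)))
  | md6 : Md (tmul (Var 0) (Var 1)) (tmul (Var 1) (Var 0))
  | md7 : Md (tmul tone (Var 0)) (Var 0)
  | md8 : Md (tmul (Var 0) (tadd (Var 1) (Var 2)))
             (tadd (tmul (Var 0) (Var 1)) (tmul (Var 0) (Var 2)))
  | md9 : Md (tinv (tinv (Var 0))) (Var 0)
  | md10 : Md (tmul (Var 0) (tmul (Var 0) (tinv (Var 0)))) (Var 0).

Definition prop_pseudo_units (E : term -> term -> Prop) : Prop :=
  forall (t r : term) (C : ctx),
    derives E (tmul (one_t t) (plug C r)) (tmul (one_t t) (plug C (tmul (one_t t) r))).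

Definition prop_pseudo_zeros (E : term -> term -> Prop) : Prop :=
  forall (t r : term) (C : ctx),
    derives E (tmul (zero_t t) (plug C r)) (tmul (zero_t t) (plug C (tmul (zero_t t) r))).

Record structure : Type := Structure {
  carrier : Type;
  interp : forall f : sym, ('I_(ar f) -> carrier) -> carrier }.

Fixpoint eval (M : structure) (v : nat -> carrier M) (t : term) : carrier M :=
  match t with
  | Var n => v n
  | App f a => @interp M f (fun i => eval v (a i))
  end.

Definition valid (M : structure) (l r : term) : Prop :=
  forall v : nat -> carrier M, eval v l = eval v r.

Definition sat_eqs (E : term -> term -> Prop) (M : structure) : Prop :=
  forall l r, E l r -> valid M l r.

Definition IL (M : structure) : Prop :=
  forall v : nat -> carrier M,
    eval v (Var 0) <> eval v tzero ->
    eval v (tmul (Var 0) (tinv (Var 0))) = eval v tone.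

End UA.

(* Main.v *)
Require Import Defs.
From mathcomp Require Import all_boot.
From Stdlib Require Import FunctionalExtensionality PropExtensionality ClassicalEpsilon ProofIrrelevance Setoid Morphisms.
Set Implicit Arguments. Unset Strict Implicit. Unset Printing Implicit Defensive.

Section Main.
Variables (X : Type) (arX : X -> nat) (E : term arX -> term arX -> Prop).
Hypothesis HMd : forall l r, Md l r -> E l r.
Hypothesis Hpu : prop_pseudo_units E.
Hypothesis Hpz : prop_pseudo_zeros E.

Notation T := (term arX).
Notation D := (derives E).

Lemma eval_subst (M : structure arX) (v : nat -> carrier M) (sg : nat -> T) (t : T) :
  eval v (subst sg t) = eval (fun n => eval v (sg n)) t.
Proof.
elim: t => [n|f a IH] //=; congr interp; apply: functional_extensionality => i; exact: IH.
Qed.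

Lemma soundness r s : D r s -> forall M : structure arX, sat_eqs E M -> valid M r s.
Proof.
move=> H M HM; elim: H => {r s}.
- by move=> l r Hlr; apply: HM.
- by [].
- by move=> t u _ IH v; rewrite IH.
- by move=> t u w _ IH1 _ IH2 v; rewrite IH1 IH2.
- by move=> sg t u _ IH v; rewrite !eval_subst IH.
- move=> f a b _ IH v /=; congr interp; apply: functional_extensionality => i; exact: IH.
Qed.


Lemma subst_tadd sg (a b : T) : subst sg (tadd a b) = tadd (subst sg a) (subst sg b).
Proof. rewrite /tadd /=; congr App; apply: functional_extensionality => i; rewrite /args2; by case: ifP. Qed.
Lemma subst_tmul sg (a b : T) : subst sg (tmul a b) = tmul (subst sg a) (subst sg b).
Proof. rewrite /tmul /=; congr App; apply: functional_extensionality => i; rewrite /args2; by case: ifP. Qed.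
Lemma subst_topp sg (a : T) : subst sg (topp a) = topp (subst sg a).
Proof. by []. Qed.
Lemma subst_tinv sg (a : T) : subst sg (tinv a) = tinv (subst sg a).
Proof. by []. Qed.
Lemma subst_tzero sg : subst sg (tzero arX) = tzero arX.
Proof. rewrite /tzero /=; congr App; apply: functional_extensionality => -[]; by []. Qed.
Lemma subst_tone sg : subst sg (tone arX) = tone arX.
Proof. rewrite /tone /=; congr App; apply: functional_extensionality => -[]; by []. Qed.

Global Instance D_equiv : Equivalence D.
Proof. split; [exact: d_refl | exact: d_sym | exact: d_trans]. Qed.

Global Instance tadd_proper : Proper (D ==> D ==> D) (@tadd X arX).
Proof. move=> a a' Ha b b' Hb; apply: d_cong => i; rewrite /args2; by case: ifP. Qed.
Global Instance tmul_proper : Proper (D ==> D ==> D) (@tmul X arX).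
Proof. move=> a a' Ha b b' Hb; apply: d_cong => i; rewrite /args2; by case: ifP. Qed.
Global Instance topp_proper : Proper (D ==> D) (@topp X arX).
Proof. move=> a a' Ha; by apply: d_cong. Qed.
Global Instance tinv_proper : Proper (D ==> D) (@tinv X arX).
Proof. move=> a a' Ha; by apply: d_cong. Qed.

Definition sg3 (a b c : T) : nat -> T := fun n => match n with 0 => a | 1 => b | _ => c end.

Ltac inst H a b c := have := d_subst (sg3 a b c) (d_ax (HMd (H X arX)));
  do 4 rewrite ?subst_tadd ?subst_tmul ?subst_topp ?subst_tinv ?subst_tzero ?subst_tone; cbv beta iota.

#[local] Hint Extern 0 (derives _ _ _) => reflexivity : core.
Declare Scope tm_scope.
Notation "a + b" := (tadd a b) : tm_scope.
Notation "a * b" := (tmul a b) : tm_scope.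
Notation "- a" := (topp a) : tm_scope.
Notation "0" := (tzero arX) : tm_scope.
Notation "1" := (tone arX) : tm_scope.
Open Scope tm_scope.

Lemma addA a b c : D ((a + b) + c) (a + (b + c)). Proof. by inst md1 a b c. Qed.
Lemma addC a b : D (a + b) (b + a). Proof. by inst md2 a b a. Qed.
Lemma add0 a : D (a + 0) a. Proof. by inst md3 a a a. Qed.
Lemma addN a : D (a + - a) 0. Proof. by inst md4 a a a. Qed.
Lemma mulA a b c : D ((a * b) * c) (a * (b * c)). Proof. by inst md5 a b c. Qed.
Lemma mulC a b : D (a * b) (b * a). Proof. by inst md6 a b a. Qed.
Lemma mul1 a : D (1 * a) a. Proof. by inst md7 a a a. Qed.
Lemma mulD a b c : D (a * (b + c)) (a * b + a * c). Proof. by inst md8 a b c. Qed.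
Lemma mulinv a : D (a * (a * tinv a)) a. Proof. by inst md10 a a a. Qed.

Lemma add0l a : D (0 + a) a. Proof. by rewrite addC add0. Qed.
Lemma mul0 a : D (a * 0) 0.
Proof.
have H : D (a * 0) (a * 0 + a * 0) by rewrite -mulD add0.
transitivity (a * 0 + (a * 0 + - (a * 0))); first by rewrite addN add0.
rewrite -addA -H; exact: addN.
Qed.

Lemma mulN a b : D (a * - b) (- (a * b)).
Proof.
have H : D (a * b + a * - b) 0 by rewrite -mulD addN mul0.
transitivity (a * - b + (a * b + - (a * b))); first by rewrite addN add0.
by rewrite -addA (addC (a * - b) (a * b)) H add0l.
Qed.

Lemma one_one x : D (one_t x * one_t x) (one_t x).
Proof. by rewrite /one_t -mulA (mulC (x * tinv x) x) mulinv. Qed.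
Lemma one_1 x : D (one_t x * 1) (one_t x).
Proof. by rewrite mulC mul1. Qed.
Lemma split_oz x a : D a (one_t x * a + zero_t x * a).
Proof.
symmetry. rewrite (mulC (one_t x) a) (mulC (zero_t x) a) -mulD /zero_t.
rewrite (addC 1 (- one_t x)) -addA addN add0l.
by rewrite mulC mul1.
Qed.
Lemma zero_x x : D (zero_t x * x) 0.
Proof.
by rewrite mulC /zero_t mulD (mulC x 1) mul1 mulN /one_t mulinv addN.
Qed.
Lemma zero_0 x : D (zero_t x * 0) 0.
Proof. exact: mul0. Qed.
Close Scope tm_scope.

Definition rel := T -> T -> Prop.
Record cong (R : rel) : Prop := {
  c_refl : forall a, R a a;
  c_sym : forall a b, R a b -> R b a;
  c_trans : forall a b c, R a b -> R b c -> R a c;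
  c_ctx : forall f (j : 'I_(ar arX f)) (c : 'I_(ar arX f) -> T) x y, R x y ->
     R (App (f:=f) (fun i => if i == j then x else c i)) (App (f:=f) (fun i => if i == j then y else c i)) }.

Lemma cong_app R : cong R -> forall f (a b : 'I_(ar arX f) -> T),
  (forall i, R (a i) (b i)) -> R (App (f:=f) a) (App (f:=f) b).
Proof.
move=> HR f a b Hab.
suff H : forall k, R (App (f:=f) a) (App (f:=f) (fun i => if (i < k)%N then b i else a i)).
  have -> : b = (fun i => if (i < ar arX f)%N then b i else a i).
    by apply: functional_extensionality => i; rewrite ltn_ord.
  exact: H.
elim=> [|k IH].
  have -> : (fun i : 'I_(ar arX f) => if (i < 0)%N then b i else a i) = a by [].
  exact: c_refl.
case: (ltnP k (ar arX f)) => hk.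
  set j := Ordinal hk.
  apply: (c_trans HR IH).
  have e1 : (fun i : 'I_(ar arX f) => if (i < k)%N then b i else a i) =
            (fun i => if i == j then a j else (if (i < k)%N then b i else a i)).
    apply: functional_extensionality => i; case: (i =P j) => [->|//]; by rewrite /= ltnn.
  have e2 : (fun i : 'I_(ar arX f) => if (i < k.+1)%N then b i else a i) =
            (fun i => if i == j then b j else (if (i < k)%N then b i else a i)).
    apply: functional_extensionality => i; case: (i =P j) => [->|hij]; first by rewrite /= ltnS leqnn.
    rewrite ltnS leq_eqVlt; case: eqP => // hik; case: hij; apply: val_inj; exact: hik.
  rewrite e1 e2; apply: (c_ctx HR); exact: Hab.
have -> : (fun i : 'I_(ar arX f) => if (i < k.+1)%N then b i else a i) =
          (fun i => if (i < k)%N then b i else a i).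
  apply: functional_extensionality => i.
  have hik : (i < k)%N by apply: leq_trans (ltn_ord i) hk.
  by rewrite hik ltnS ltnW.
exact: IH.
Qed.

Lemma cong_plug R C x y : cong R -> R x y -> R (plug C x) (plug C y).
Proof. move=> HR Hxy; elim: C => //= f j a C IH; exact: (c_ctx HR). Qed.

Lemma cong_subst R (s1 s2 : nat -> T) t : cong R -> (forall n, R (s1 n) (s2 n)) ->
  R (subst s1 t) (subst s2 t).
Proof. move=> HR H; elim: t => [n|f a IH] //=; exact: cong_app. Qed.

Lemma cong_mul R a a' b b' : cong R -> R a a' -> R b b' -> R (tmul a b) (tmul a' b').
Proof. move=> HR Ha Hb; apply: cong_app => // i; rewrite /args2; by case: ifP. Qed.
Lemma cong_add R a a' b b' : cong R -> R a a' -> R b b' -> R (tadd a b) (tadd a' b').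
Proof. move=> HR Ha Hb; apply: cong_app => // i; rewrite /args2; by case: ifP. Qed.

Lemma subst_id (t : T) : subst (Var arX) t = t.
Proof. elim: t => [n|f a IH] //=; congr App; apply: functional_extensionality => i; exact: IH. Qed.

Lemma cong_D : cong D.
Proof.
split; [exact: d_refl | exact: d_sym | exact: d_trans|].
move=> f j c x y H; apply: d_cong => i; by case: (i == j).
Qed.

Definition incl (R S : rel) := forall a b, R a b -> S a b.
Lemma rel_ext (R S : rel) : incl R S -> incl S R -> R = S.
Proof.
move=> H1 H2; apply: functional_extensionality => a; apply: functional_extensionality => b.
apply: propositional_extensionality; split; [exact: H1 | exact: H2].
Qed.

Section Compl.
Variables (r s : T).
Hypothesis nrs : ~ D r s.

Definition PP (R : rel) := cong R /\ incl D R /\ ~ R r s.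

Definition strictly (R S : rel) := PP S /\ incl R S /\ ~ incl S R.

Definition g (R : rel) : rel :=
  match excluded_middle_informative (exists S, strictly R S) with
  | left H => proj1_sig (constructive_indefinite_description _ H)
  | right _ => R
  end.

Lemma g_spec R : (exists S, strictly R S) -> strictly R (g R).
Proof.
rewrite /g; case: excluded_middle_informative => // H _.
exact: (proj2_sig (constructive_indefinite_description _ H)).
Qed.
Lemma g_id R : ~ (exists S, strictly R S) -> g R = R.
Proof. by rewrite /g; case: excluded_middle_informative. Qed.
Lemma g_incl R : incl R (g R).
Proof.
case: (classic (exists S, strictly R S)) => H.
  by case: (g_spec H) => _ [].
by rewrite g_id.
Qed.
Lemma g_P R : PP R -> PP (g R).
Proof.
case: (classic (exists S, strictly R S)) => H.
  by case: (g_spec H).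
by rewrite g_id.
Qed.

Definition union (S : rel -> Prop) : rel := fun a b => exists R, S R /\ R a b.
Definition chain (S : rel -> Prop) := forall R1 R2, S R1 -> S R2 -> incl R1 R2 \/ incl R2 R1.

Lemma P_union S : (forall R, S R -> PP R) -> chain S -> (exists R, S R) -> PP (union S).
Proof.
move=> HP Hc [R0 HR0]; split; [split|split].
- by move=> a; exists R0; split => //; apply: c_refl; case: (HP _ HR0).
- move=> a b [R [HR Hab]]; exists R; split => //; apply: c_sym Hab; by case: (HP _ HR).
- move=> a b c [R1 [HR1 H1]] [R2 [HR2 H2]].
  case: (Hc _ _ HR1 HR2) => Hi.
    exists R2; split => //; apply: (c_trans _ (Hi _ _ H1) H2); by case: (HP _ HR2).
  exists R1; split => //; apply: (c_trans _ H1 (Hi _ _ H2)); by case: (HP _ HR1).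
- move=> f j c x y [R [HR Hxy]]; exists R; split => //; apply: c_ctx Hxy; by case: (HP _ HR).
- move=> a b Hab; exists R0; split => //; case: (HP _ HR0) => _ [H _]; exact: H.
- move=> [R [HR Hrs]]; by case: (HP _ HR) => _ [_ []].
Qed.

Inductive tower : rel -> Prop :=
| t_base : tower D
| t_step R : tower R -> tower (g R)
| t_lim (S : rel -> Prop) : (forall R, S R -> tower R) -> chain S -> (exists R, S R) -> tower (union S).

Lemma tower_P R : tower R -> PP R.
Proof.
elim => {R}.
- split; first exact: cong_D. split => //; by move=> a b.
- move=> R _; exact: g_P.
- move=> S _ IH Hc Hne; exact: P_union.
Qed.

Lemma base_le R : tower R -> incl D R.
Proof.
elim => {R}.
- by move=> a b.
- move=> R _ H a b Hab; apply: g_incl; exact: H.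
- move=> S _ IH _ [R0 HR0] a b Hab; exists R0; split => //; exact: IH.
Qed.

Definition extreme c := forall x, tower x -> incl x c -> ~ incl c x -> incl (g x) c.

Lemma L1 c : tower c -> extreme c -> forall x, tower x -> incl x c \/ incl (g c) x.
Proof.
move=> Tc Ec x; elim => {x}.
- left; exact: base_le.
- move=> x Tx [H|H].
    case: (classic (incl c x)) => H2.
      right; rewrite (rel_ext H H2) => a b; exact: id.
    left; exact: Ec.
  right => a b Hab; apply: g_incl; exact: H.
- move=> S _ IH Hc Hne.
  case: (classic (forall R, S R -> incl R c)) => H.
    left => a b [R [HR Hab]]; exact: H HR _ _ Hab.
  apply: NNPP => Hn; apply: H => R HR.
  case: (IH _ HR) => // H2; case: Hn; right => a b Hab; exists R; split => //; exact: H2.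
Qed.

Lemma L2 c : tower c -> extreme c.
Proof.
elim => {c}.
- move=> x Tx H1 H2; case: H2; exact: base_le.
- move=> c Tc Ec x Tx H1 H2.
  case: (L1 Tc Ec Tx) => H3; last by case: H2.
  case: (classic (incl c x)) => H4.
    rewrite (rel_ext H3 H4) => a b; exact: id.
  move=> a b Hab; apply: g_incl; exact: (Ec x Tx H3 H4).
- move=> S TS ES Hc Hne x Tx H1 H2.
  case: (classic (forall c, S c -> incl (g c) x)) => H.
    case: H2 => a b [c [Sc Hab]]; apply: (H c Sc); exact: g_incl.
  have [c [Sc Hgc]] : exists c, S c /\ ~ incl (g c) x.
    apply: NNPP => Hn; apply: H => c Sc; apply: NNPP => Hg; apply: Hn; by exists c.
  have Hxc : incl x c by case: (L1 (TS _ Sc) (ES _ Sc) Tx).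
  case: (classic (incl c x)) => H4.
    have Exc := rel_ext Hxc H4; subst x.
    have [d [Sd Hd]] : exists d, S d /\ ~ incl d c.
      apply: NNPP => Hn; apply: H2 => a b [d [Sd Hab]].
      apply: NNPP => Hn2; apply: Hn; exists d; split => // Hdc; apply: Hn2; exact: Hdc.
    case: (Hc _ _ Sc Sd) => Hcd; last by case: Hd.
    move=> a b Hab; exists d; split => //; exact: (ES d Sd c Tx Hcd Hd).
  move=> a b Hab; exists c; split => //; exact: (ES c Sc x Tx Hxc H4).
Qed.

Lemma tower_chain : chain tower.
Proof.
move=> x y Tx Ty; case: (L1 Ty (L2 Ty) Tx) => H; first by left.
right => a b Hab; apply: H; exact: g_incl.
Qed.

Lemma maximal : exists M, PP M /\ forall S, PP S -> incl M S -> incl S M.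
Proof.
have TM : tower (union tower) by apply: t_lim => //; [exact: tower_chain | exists D; exact: t_base].
exists (union tower); split; first exact: tower_P.
move=> S PS HMS; apply: NNPP => HSM.
have Hex : exists S, strictly (union tower) S by exists S.
case: (g_spec Hex) => _ [_ H]; apply: H => a b Hab; exists (g (union tower)); split => //.
exact: t_step.
Qed.

End Compl.

Section Quot.
Variables (r s : T) (M : rel).
Hypothesis PM : PP r s M.
Hypothesis maxM : forall S, PP r s S -> incl M S -> incl S M.

Lemma cM : cong M. Proof. by case: PM. Qed.
Lemma DM : incl D M. Proof. by case: PM => _ []. Qed.
Lemma nM : ~ M r s. Proof. by case: PM => _ []. Qed.

Lemma DMtrans a b c d : D a b -> M b c -> D c d -> M a d.
Proof.
move=> H1 H2 H3; apply: (c_trans cM (DM H1)); apply: (c_trans cM H2); exact: DM.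
Qed.

Lemma cong_u (u : T) : (forall r C, D (tmul u (plug C r)) (tmul u (plug C (tmul u r)))) ->
  cong (fun a b => M (tmul u a) (tmul u b)).
Proof.
move=> Hu; split.
- move=> a; exact: (c_refl cM).
- move=> a b; exact: (c_sym cM).
- move=> a b c; exact: (c_trans cM).
- move=> f j c x y Hxy.
  have := Hu x (CApp j c (Hole arX)); have := Hu y (CApp j c (Hole arX)); rewrite /= => H1 H2.
  apply: (DMtrans H2 _ (d_sym H1)).
  apply: (cong_mul cM (c_refl cM _)).
  exact: (cong_plug (CApp j c (Hole arX)) cM Hxy).
Qed.

Lemma incl_u (u : T) : incl M (fun a b => M (tmul u a) (tmul u b)).
Proof. move=> a b H; exact: (cong_mul cM (c_refl cM _) H). Qed.

Lemma IL_M x : ~ M x (tzero arX) -> M (tmul x (tinv x)) (tone arX).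
Proof.
move=> Hx.
have P1 := cong_u (Hpu x); have P0 := cong_u (Hpz x).
case: (classic (M (tmul (one_t x) r) (tmul (one_t x) s))) => H1.
  case: (classic (M (tmul (zero_t x) r) (tmul (zero_t x) s))) => H0.
    case: nM; apply: (DMtrans (split_oz x r) _ (d_sym (split_oz x s))).
    exact: cong_add cM H1 H0.
  have HS : PP r s (fun a b => M (tmul (zero_t x) a) (tmul (zero_t x) b)).
    split => //; split => // a b Hab; apply: incl_u; exact: DM.
  case: Hx; apply: (maxM HS (@incl_u _)).
  apply: (DMtrans (zero_x x) (c_refl cM _)); symmetry; exact: zero_0.
have HS : PP r s (fun a b => M (tmul (one_t x) a) (tmul (one_t x) b)).
  split => //; split => // a b Hab; apply: incl_u; exact: DM.
apply: (maxM HS (@incl_u _)).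
apply: (DMtrans (one_one x) (c_refl cM _)); symmetry; exact: one_1.
Qed.

Definition rep (t : T) : T := epsilon (inhabits t) (M t).
Lemma rep_spec t : M t (rep t).
Proof. rewrite /rep; apply: (epsilon_spec (inhabits t) (M t)); exists t; exact: (c_refl cM). Qed.
Lemma rep_eq a b : M a b -> rep a = rep b.
Proof.
move=> Hab; rewrite /rep.
have E1 : M a = M b.
  apply: functional_extensionality => c; apply: propositional_extensionality; split => H.
    exact: (c_trans cM (c_sym cM Hab) H).
  exact: (c_trans cM Hab H).
move: (inhabits a) (inhabits b); rewrite E1 => i1 i2; by rewrite (proof_irrelevance _ i1 i2).
Qed.
Lemma rep_M a b : rep a = rep b -> M a b.
Proof.
move=> H; apply: (c_trans cM (rep_spec a)); rewrite H; apply: c_sym cM _ _ _; exact: rep_spec.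
Qed.
Lemma rep_idem t : rep (rep t) = rep t.
Proof. symmetry; apply: rep_eq; exact: rep_spec. Qed.

Definition Q := {t : T | rep t = t}.
Definition norm (t : T) : Q := exist _ (rep t) (rep_idem t).
Definition Qstr : structure arX :=
  {| carrier := Q; interp := fun f (a : 'I_(ar arX f) -> Q) => norm (App (f:=f) (fun i => proj1_sig (a i))) |}.

Lemma Q_eq (p q : carrier Qstr) : proj1_sig p = proj1_sig q -> p = q.
Proof. case: p => p hp; case: q => q hq /= E1; exact: subset_eq_compat. Qed.

Lemma eval_Q (v : nat -> carrier Qstr) t :
  proj1_sig (eval v t) = rep (subst (fun n => proj1_sig (v n)) t).
Proof.
elim: t => [n|f a IH] /=.
  by case: (v n) => p hp /=.
apply: rep_eq; apply: (cong_app cM) => i; rewrite IH; apply: (c_sym cM); exact: rep_spec.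
Qed.

Lemma Q_sat : sat_eqs E Qstr.
Proof.
move=> l r' Hl v; apply: Q_eq; rewrite !eval_Q; apply: rep_eq; apply: DM.
apply: d_subst; exact: d_ax.
Qed.

Lemma Q_IL : IL Qstr.
Proof.
move=> v Hv; apply: Q_eq; rewrite !eval_Q subst_tmul subst_tinv subst_tone /=.
apply: rep_eq; apply: IL_M => H; apply: Hv; apply: Q_eq; rewrite !eval_Q subst_tzero /=.
exact: rep_eq.
Qed.

Lemma Q_not_valid : ~ valid Qstr r s.
Proof.
move=> H; have := H (fun n => norm (Var arX n)).
move=> /(f_equal (@proj1_sig _ _)); rewrite !eval_Q /= => /rep_M H2.
apply: nM.
have Hs : forall t, M t (subst (fun n => rep (Var arX n)) t).
  move=> t; rewrite -{1}(subst_id t); apply: cong_subst cM _ => n; exact: rep_spec.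
apply: (c_trans cM (Hs r)); apply: (c_trans cM H2); apply: c_sym cM _ _ _; exact: Hs.
Qed.
End Quot.

Lemma completeness r s : (forall M : structure arX, sat_eqs E M -> IL M -> valid M r s) -> D r s.
Proof.
move=> H; apply: NNPP => nrs.
case: (maximal nrs) => M [PM maxM].
apply: (@Q_not_valid r s M PM); apply: H; [exact: (@Q_sat r s M PM) | exact: (@Q_IL r s M PM maxM)].
Qed.
End Main.

Theorem theorem2 (X : Type) (arX : X -> nat) (E : term arX -> term arX -> Prop)
  (HMd : forall l r, Md l r -> E l r)
  (Hpu : prop_pseudo_units E) (Hpz : prop_pseudo_zeros E) :
  forall r s : term arX,
    derives E r s <-> (forall M : structure arX, sat_eqs E M -> IL M -> valid M r s).
Proof.
move=> r s; split.
  move=> H M HM _; exact: (soundness H HM).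
exact: (completeness HMd Hpu Hpz).
Qed.
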